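(* Fix $i\in\{1,\dots,k\}$ and let $\pi_i$ and $\mathcal{M}^\pi_i$ be defined as in the context. Then $|\mathcal{M}^\pi_i|\le 3\epsilon\cdot 2^{kn}$.
   Context: Setting. $\mathcal{N}$ is a directed network containing nodes $s_1,\dots,s_k,t_1,\dots,t_k$. The network $\mathcal{G}$ is obtained from $\mathcal{N}$ by adding new nodes $s,t,A_1,\dots,A_k,B_1,\dots,B_k$ and, for each $i$, the unit-capacity edges $a_i=(s,A_i)$, two parallel edges $x_i,y_i$ from $A_i$ to $B_i$, $z_i=(A_i,s_i)$, $z'_i=(t_i,B_i)$, and $b_i=(B_i,t)$; the incoming edges of $t$ are exactly $b_1,\dots,b_k$. Admissible error patterns $\boldsymbol r=(r_e)$ are those in which at most one edge $e$ has $r_e\neq0$, with $e\notin\{a_1,\dots,a_k,b_1,\dots,b_k\}$. The output of an edge is its input XOR $r_e$. Let $\mathcal{C}$ be a length-$n$ network code on $\mathcal{G}$. The source $s$ has message $m\in[2^{kn}]$, where $[N]=\{1,\dots,N\}$. An edge $e=(u,v)$ of capacity $c_e$ carries a value in $[2^{nc_e}]$ computed from the signals on the incoming edges of $u$ (and from $m$ if $u=s$). The terminal $t$ decodes the tuple received on $(b_1,\dots,b_k)$ to a message. For an edge $e$, $e(m,\boldsymbol r)$ is the signal received on $e$ under message $m$ and error pattern $\boldsymbol r$, and $e(m)=e(m,\boldsymbol 0)$. Let $\mathcal{M}^{\text{good}}$ be the set of messages $m$ such that $t$ decodes to $m$ under every admissible error pattern when $m$ is sent. Assume $\epsilon\ge0$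 and $|\mathcal{M}^{\text{good}}|\ge(1-\epsilon)2^{kn}$. Define $\pi_i:[2^n]\to[2^n]$ by letting $\pi_i(\hat b)$ be a value $\hat a$ maximizing $|\{m\in\mathcal{M}^{\text{good}}:a_i(m)=\hat a,\ b_i(m)=\hat b\}|$, with ties broken arbitrarily. Let $\mathcal{M}^\pi_i=\{m\in\mathcal{M}^{\text{good}}:\pi_i(b_i(m))\ne a_i(m)\}$. *)

(* Defs.v *)
From mathcomp Require Import all_boot all_order all_algebra.
Set Implicit Arguments. Unset Strict Implicit. Unset Printing Implicit Defensive.

Inductive gnode (V : Type) (k : nat) : Type :=
  NodeN of V | NodeS | NodeT | NodeA of 'I_k | NodeB of 'I_k.
Arguments NodeN {V k}. Arguments NodeS {V k}. Arguments NodeT {V k}.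
Arguments NodeA {V k}. Arguments NodeB {V k}.

Inductive gedge (E : Type) (k : nat) : Type :=
  EdgeN of E | Ea of 'I_k | Ex of 'I_k | Ey of 'I_k
| Ez of 'I_k | Ez' of 'I_k | Eb of 'I_k.
Arguments EdgeN {E k}. Arguments Ea {E k}. Arguments Ex {E k}.
Arguments Ey {E k}. Arguments Ez {E k}. Arguments Ez' {E k}. Arguments Eb {E k}.

Section G.
Variables (V E : finType) (tail head : E -> V) (c : E -> nat) (k n : nat)
          (s_ t_ : 'I_k -> V).

Definition gtail (e : gedge E k) : gnode V k :=
  match e with
  | EdgeN e0 => NodeN (tail e0)
  | Ea _ => NodeS
  | Ex i | Ey i | Ez i => NodeA i
  | Ez' i => NodeN (t_ i)
  | Eb i => NodeB i
  end.

Definition ghead (e : gedge E k) : gnode V k :=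
  match e with
  | EdgeN e0 => NodeN (head e0)
  | Ea i => NodeA i
  | Ex i | Ey i => NodeB i
  | Ez i => NodeN (s_ i)
  | Ez' i => NodeB i
  | Eb _ => NodeT
  end.

(* number of bits carried by an edge: n * c_e (gadget edges have capacity 1) *)
Definition gbits (e : gedge E k) : nat :=
  match e with EdgeN e0 => n * c e0 | _ => n end.

(* a signal on edge e: an element of [2^(n c_e)], encoded as n c_e bits *)
Definition sig_val (e : gedge E k) := {ffun 'I_(gbits e) -> bool}.

Definition msg := 'I_(2 ^ (k * n)).

Definition signals := forall e : gedge E k, sig_val e.

Definition xorv m (x y : {ffun 'I_m -> bool}) : {ffun 'I_m -> bool} :=
  [ffun j => x j (+) y j].
Definition zerov m : {ffun 'I_m -> bool} := [ffun => false].

Definition zero_pattern : signals := fun e => zerov (gbits e).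

(* The encoding function of a network code: edge e computes its value from
   the message and the signals; [code_local] says it really only depends on
   the signals on the incoming edges of its tail, and on the message only if
   its tail is s. *)
Definition encoder := forall e : gedge E k, msg -> signals -> sig_val e.

Definition code_local (enc : encoder) : Prop :=
  forall (e : gedge E k) (m m' : msg) (sig sig' : signals),
    (forall e', ghead e' = gtail e -> sig e' = sig' e') ->
    (gtail e = NodeS -> m = m') ->
    enc e m sig = enc e m' sig'.

(* For an acyclic G, iterating the local update (#|E| + 6k + 1) times (more
   than the number of edges of G) from any start yields the unique consistent
   assignment. *)
Definition eval (enc : encoder) (m : msg) (r : signals) : signals :=
  iter (#|E| + 6 * k).+1
    (fun (sig : signals) (e : gedge E k) => xorv (enc e m sig) (r e))
    zero_pattern.

Definition admissible (r : signals) : Prop :=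
  (forall e e' : gedge E k, r e <> zerov _ -> r e' <> zerov _ -> e = e') /\
  (forall i : 'I_k, r (Ea i) = zerov _ /\ r (Eb i) = zerov _).

Definition decoder := ('I_k -> {ffun 'I_n -> bool}) -> msg.

Definition good (enc : encoder) (dec : decoder) (m : msg) : Prop :=
  forall r : signals, admissible r -> dec (fun i => eval enc m r (Eb i)) = m.

Definition a_sig (enc : encoder) (i : 'I_k) (m : msg) : {ffun 'I_n -> bool} :=
  eval enc m zero_pattern (Ea i).
Definition b_sig (enc : encoder) (i : 'I_k) (m : msg) : {ffun 'I_n -> bool} :=
  eval enc m zero_pattern (Eb i).

End G.

(* Main.v *)
Require Import Defs.
From mathcomp Require Import all_boot all_order all_algebra zify ring lra.
Import Order.TTheory GRing.Theory Num.Theory.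
From Stdlib Require Import FunctionalExtensionality Classical ClassicalEpsilon.
Set Implicit Arguments. Unset Strict Implicit. Unset Printing Implicit Defensive.

Lemma card_disj (T : finType) (A B : {set T}) :
  A :&: B = set0 -> #|A| + #|B| <= #|T|.
Proof. by move=> h; rewrite -cardsUI h cards0 addn0 max_card. Qed.

Lemma card_split (T : finType) (A : {set T}) (p : pred T) :
  #|[set x in A | p x]| + #|[set x in A | ~~ p x]| = #|A|.
Proof.
rewrite -(cardsID [set x | p x] A); congr (_ + _); apply: eq_card => x;
  by rewrite !inE // andbC.
Qed.

Lemma card_part (T U : finType) (f : T -> U) (A : {set T}) :
  #|A| = \sum_(u : U) #|[set x in A | f x == u]|.
Proof.
rewrite -sum1_card (partition_big f xpredT) //=.
apply: eq_bigr => u _; rewrite -sum1_card; apply: eq_bigl => x.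
by rewrite !inE.
Qed.

Lemma card_tuples k n : #|{: {ffun 'I_k -> {ffun 'I_n -> bool}}}| = 2 ^ (k * n).
Proof. by rewrite card_ffun card_ffun card_bool !card_ord -expnM mulnC. Qed.

Section Net.
Variables (V E : finType) (tail head : E -> V) (c : E -> nat) (k n : nat)
          (s_ t_ : 'I_k -> V).
Variable rank : V -> nat.
Hypothesis Hrank : forall e, rank (tail e) < rank (head e).
Variable enc : encoder c k n.
Hypothesis Henc : code_local tail head s_ t_ enc.

Local Notation G := (gedge E k).
Local Notation sigs := (signals c k n).
Local Notation gt := (gtail tail t_).
Local Notation gh := (ghead head s_).

Definition Mr := \max_(v : V) rank v.
Definition gr (x : gnode V k) : nat :=
  match x with
  | NodeS => 0 | NodeA _ => 1 | NodeN v => (rank v).+2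
  | NodeB _ => Mr.+3 | NodeT => Mr.+4 end.

Lemma gr_edge (e : G) : gr (gt e) < gr (gh e).
Proof.
case: e => [e0|j|j|j|j|j|j] //=.
- by rewrite !ltnS Hrank.
- by rewrite !ltnS (leq_bigmax (F := rank)).
Qed.

Definition allE : seq G :=
  map EdgeN (enum E) ++ map Ea (enum 'I_k) ++ map Ex (enum 'I_k) ++
  map Ey (enum 'I_k) ++ map Ez (enum 'I_k) ++ map Ez' (enum 'I_k) ++
  map Eb (enum 'I_k).

Lemma size_allE : size allE = #|E| + 6 * k.
Proof. rewrite /allE !size_cat !size_map -!enumT size_enum_ord -cardT; lia. Qed.

Lemma has_allE (P : pred G) e : P e -> has P allE.
Proof.
move=> Pe; rewrite /allE !has_cat !has_map -!enumT.
have H (T : finType) (f : T -> G) x : P (f x) -> has (preim f P) (enum T).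
  by move=> h; apply/hasP; exists x; rewrite ?mem_enum.
case: e Pe => [e0|j|j|j|j|j|j] Pe; rewrite (H _ _ _ Pe) ?orbT //.
Qed.


Definition dep (e : G) : nat := count (fun x => gr (gt x) < gr (gt e)) allE.

Lemma count_lt (T : Type) (p q : pred T) (s : seq T) :
  (forall x, p x -> q x) -> has (fun x => q x && ~~ p x) s -> count p s < count q s.
Proof.
move=> pq; elim: s => //= x s IH /orP [/andP [qx npx]|h].
  rewrite (negbTE npx) qx /= add0n add1n ltnS.
  by apply: sub_count => y; apply: pq.
have Hle : p x <= q x by case: (p x) (pq x) => // ->.
by rewrite -addnS; apply: leq_add => //; apply: IH.
Qed.

Lemma dep_lt (e e' : G) : gh e' = gt e -> dep e' < dep e.
Proof.
move=> h; have he : gr (gt e') < gr (gt e) by rewrite -h gr_edge.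
apply: count_lt.
  by move=> x /= hx; apply: ltn_trans hx he.
by apply: (has_allE (e := e')); rewrite /= he ltnn.
Qed.

Lemma dep_bound (e : G) : dep e < (#|E| + 6 * k).+1.
Proof. by rewrite ltnS -size_allE count_size. Qed.

Definition F (m : msg k n) (r : sigs) (sig : sigs) : sigs :=
  fun e => xorv (enc e m sig) (r e).

Definition isfix m r (sig : sigs) := forall e, sig e = F m r sig e.

Lemma eval_fix m r : isfix m r (eval enc m r).
Proof.
suff H : forall t (e : G), dep e < t ->
  iter t (F m r) (zero_pattern c n) e = iter t.+1 (F m r) (zero_pattern c n) e.
  move=> e; rewrite /eval (H _ _ (dep_bound e)) //.
elim=> [//|t IH] e /= he.
rewrite /F; congr xorv; apply: Henc => // e' h'.
by apply: IH; apply: leq_trans (dep_lt h') _; rewrite -ltnS.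
Qed.

Lemma agree m1 r1 m2 r2 sig1 sig2 (P : G -> Prop) :
  isfix m1 r1 sig1 -> isfix m2 r2 sig2 ->
  (forall e, P e -> (forall e', gh e' = gt e -> P e' -> sig1 e' = sig2 e') ->
     F m1 r1 sig1 e = F m2 r2 sig2 e) ->
  forall e, P e -> sig1 e = sig2 e.
Proof.
move=> f1 f2 H.
suff: forall t e, dep e < t -> P e -> sig1 e = sig2 e.
  by move=> H' e; apply: H' (ltnSn _).
elim=> [//|t IH] e he Pe.
rewrite f1 f2; apply: H => // e' h' Pe'.
by apply: IH => //; apply: leq_trans (dep_lt h') _; rewrite -ltnS.
Qed.

Lemma xorv0 m (x : {ffun 'I_m -> bool}) : xorv x (zerov m) = x.
Proof. by apply/ffunP => j; rewrite !ffunE addbF. Qed.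

Lemma xorvK m (x y : {ffun 'I_m -> bool}) : xorv x (xorv x y) = y.
Proof. by apply/ffunP => j; rewrite !ffunE addbA addbb. Qed.

Local Notation zp := (zero_pattern c n).
Local Notation ev := (eval enc).

Lemma clean m e : ev m zp e = enc e m (ev m zp).
Proof. by rewrite {1}(eval_fix m zp e) /F xorv0. Qed.

Lemma predS e' : gh e' = NodeS -> False.
Proof. by case: e'. Qed.
Lemma predA e' j : gh e' = NodeA j -> e' = Ea j.
Proof. by case: e' => //= j' [->]. Qed.
Lemma predB e' j : gh e' = NodeB j -> [\/ e' = Ex j, e' = Ey j | e' = Ez' j].
Proof. by case: e' => //= j' [->]; [apply: Or31|apply: Or32|apply: Or33]. Qed.
Lemma predN e' v : gh e' = NodeN v -> (exists e0, e' = EdgeN e0) \/ (exists j, e' = Ez j).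
Proof. by case: e' => //= [e0 _|j _]; [left; exists e0|right; exists j]. Qed.

Lemma enc_a j m sig : enc (Ea j) m sig = a_sig enc j m.
Proof.
rewrite /a_sig clean; apply: Henc => // e' h.
by case: (predS h).
Qed.

Variable i : 'I_k.

Definition rzp (w : {ffun 'I_n -> bool}) : sigs :=
  fun e => match e as e0 return sig_val c n e0 with
           | Ez' j => if j == i then w else zerov _
           | _ => zerov _ end.

Definition rz (w : {ffun 'I_n -> bool}) : sigs :=
  fun e => match e as e0 return sig_val c n e0 with
           | Ez j => if j == i then w else zerov _
           | _ => zerov _ end.

Lemma adm_rzp w : admissible (rzp w).
Proof.
split=> // e e'.
case: e => //= j; case: e' => //= j'; case: eqP => [->|] //; case: eqP => [->|] //.
Qed.

Lemma adm_rz w : admissible (rz w).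
Proof.
split=> // e e'.
case: e => //= j; case: e' => //= j'; case: eqP => [->|] //; case: eqP => [->|] //.
Qed.

Lemma adm_zp : admissible (zp : sigs).
Proof. by split. Qed.

Definition rigid m := forall r, admissible r -> forall j, ev m r (Eb j) = b_sig enc j m.

Lemma rigid_enc m : rigid m -> forall sig : sigs,
  sig (Ex i) = ev m zp (Ex i) -> sig (Ey i) = ev m zp (Ey i) ->
  enc (Eb i) m sig = b_sig enc i m.
Proof.
move=> Rm sig hx hy.
pose w : {ffun 'I_n -> bool} := xorv (ev m zp (Ez' i)) (sig (Ez' i)).
pose r := rzp w.
pose P0 (e : G) := match e with Ez' _ | Eb _ => False | _ => True end.
have A : forall e, P0 e -> ev m r e = ev m zp e.
  apply: (agree (eval_fix _ _) (eval_fix _ _)) => e Pe IH.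
  rewrite /F.
  have -> : r e = zerov _ by clear IH; case: e Pe.
  congr xorv; apply: Henc => // e' h; apply: IH => //.
  case: e Pe h => //= [e0|j|j|j|j] _ h.
  - by case: (predN h) => [[? ->]|[? ->]].
  - by case: (predS h).
  - by rewrite (predA h).
  - by rewrite (predA h).
  - by rewrite (predA h).
have B : ev m r (Ez' i) = sig (Ez' i).
  rewrite (eval_fix m r (Ez' i)) /F /r /rzp eqxx.
  have -> : enc (Ez' i) m (ev m r) = ev m zp (Ez' i).
    rewrite clean; apply: Henc => // e' h; apply: A.
    by case: (predN h) => [[? ->]|[? ->]].
  by rewrite xorvK.
have C : enc (Eb i) m sig = enc (Eb i) m (ev m r).
  apply: Henc => // e' h; case: (predB h) => ->.
  - by rewrite A.
  - by rewrite A.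
  - by rewrite B.
rewrite C -(Rm r (adm_rzp w) i) [in RHS](eval_fix m r (Eb i)) /F.
by rewrite [r (Eb i)]/= xorv0.
Qed.

Lemma zrun m m' : (forall j, j != i -> a_sig enc j m = a_sig enc j m') ->
  exists r : sigs, [/\ admissible r,
    (forall j, j != i -> ev m r (Eb j) = b_sig enc j m'),
    ev m r (Ex i) = ev m zp (Ex i) & ev m r (Ey i) = ev m zp (Ey i)].
Proof.
move=> Ha.
pose u : {ffun 'I_n -> bool} := xorv (ev m zp (Ez i)) (ev m' zp (Ez i)).
pose r := rz u.
exists r.
pose Q (e : G) := match e with Ea j | Ex j | Ey j => j = i | _ => False end.
have A : forall e, Q e -> ev m r e = ev m zp e.
  apply: (agree (eval_fix _ _) (eval_fix _ _)) => e Pe IH.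
  rewrite /F.
  have -> : r e = zerov _ by clear IH; case: e Pe.
  congr xorv; apply: Henc => // e' h; apply: IH => //.
  case: e Pe h => //= j Pe h.
  - by case: (predS h).
  - by rewrite (predA h).
  - by rewrite (predA h).
pose P1 (e : G) := match e with Ea j | Ex j | Ey j | Eb j => j != i | _ => True end.
have B : forall e, P1 e -> ev m r e = ev m' zp e.
  apply: (agree (eval_fix _ _) (eval_fix _ _)) => e Pe IH.
  case: e Pe IH => [e0|j|j|j|j|j|j] /= Pe IH.
  - rewrite /F; congr xorv; apply: Henc => // e' h; apply: IH => //.
    by case: (predN h) => [[? ->]|[? ->]].
  - by rewrite /F !enc_a Ha.
  - rewrite /F; congr xorv; apply: Henc => // e' h; apply: IH => //.
    by rewrite (predA h).
  - rewrite /F; congr xorv; apply: Henc => // e' h; apply: IH => //.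
    by rewrite (predA h).
  - rewrite /F /r /rz; case: eqP => [ej|nej].
      subst j.
      have -> : enc (Ez i) m (ev m r) = ev m zp (Ez i).
        rewrite clean; apply: Henc => // e' h; rewrite (predA h); apply: A => /=.
        done.
      by rewrite /u xorvK xorv0 -clean.
    congr xorv; apply: Henc => // e' h; apply: IH => //.
    by rewrite (predA h) /=; apply/eqP.
  - rewrite /F; congr xorv; apply: Henc => // e' h; apply: IH => //.
    by case: (predN h) => [[? ->]|[? ->]].
  - rewrite /F; congr xorv; apply: Henc => // e' h; apply: IH => //.
    by case: (predB h) => ->.
split.
- exact: adm_rz.
- by move=> j nj; rewrite B.
- by rewrite A.
- by rewrite A.
Qed.

Lemma bdet m1 m2 : rigid m1 -> a_sig enc i m1 = a_sig enc i m2 ->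
  b_sig enc i m1 = b_sig enc i m2.
Proof.
move=> R1 ha.
have -> : b_sig enc i m2 = enc (Eb i) m1 (ev m2 zp).
  rewrite /b_sig clean. apply: (@Henc (Eb i) m2 m1) => //.
apply/esym; apply: rigid_enc => //.
- rewrite !clean; apply: Henc => // e' h; rewrite (predA h); exact/esym.
- rewrite !clean; apply: Henc => // e' h; rewrite (predA h); exact/esym.
Qed.

Variable dec : decoder k n.

Lemma keyK m m' : good enc dec m -> good enc dec m' -> rigid m ->
  (forall j, j != i -> a_sig enc j m = a_sig enc j m') ->
  b_sig enc i m = b_sig enc i m' -> m = m'.
Proof.
move=> g1 g2 R Ha Hb.
have [r [adm Hj Hx Hy]] := zrun Ha.
rewrite -(g1 r adm) -(g2 zp adm_zp); congr dec.
apply: functional_extensionality => j.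
case: (eqVneq j i) => [->|nj]; last by rewrite Hj.
rewrite (eval_fix m r (Eb i)) /F (proj2 (proj2 adm i)) xorv0.
by rewrite (rigid_enc R Hx Hy) Hb.
Qed.

Variable Mgood : {set msg k n}.
Hypothesis HMgood : forall m, m \in Mgood <-> good enc dec m.
Variable pi : {ffun 'I_n -> bool} -> {ffun 'I_n -> bool}.
Hypothesis Hpi : forall bh ah : {ffun 'I_n -> bool},
     (#|[set m in Mgood | (a_sig enc i m == ah) && (b_sig enc i m == bh)]|
      <= #|[set m in Mgood | (a_sig enc i m == pi bh) && (b_sig enc i m == bh)]|)%N.

Local Notation tup := {ffun 'I_k -> {ffun 'I_n -> bool}}.

Definition btf m (r : sigs) : tup := [ffun j => (ev m r (Eb j) : {ffun 'I_n -> bool})].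

Lemma decK m r m' r' : m \in Mgood -> admissible r -> m' \in Mgood -> admissible r' ->
  btf m r = btf m' r' -> m = m'.
Proof.
move=> /HMgood g1 a1 /HMgood g2 a2 h.
rewrite -(g1 r a1) -(g2 r' a2); congr dec; apply: functional_extensionality => j.
by have := congr1 (fun f : tup => f j) h; rewrite !ffunE.
Qed.

Definition reach m (B : tup) := exists r, admissible r /\ btf m r = B.

Definition o m : tup :=
  match excluded_middle_informative (exists B, reach m B /\ B <> btf m zp) with
  | left h => proj1_sig (constructive_indefinite_description _ h)
  | right _ => btf m zp end.

Lemma o_spec m : o m <> btf m zp -> reach m (o m).
Proof.
rewrite /o; case: excluded_middle_informative => [h|//] _.
by case: (proj2_sig (constructive_indefinite_description _ h)).
Qed.

Lemma o_rigid m : o m = btf m zp -> rigid m.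
Proof.
move=> ho r adm j.
case: (classic (ev m r (Eb j) = b_sig enc j m)) => // hne; exfalso.
move: ho; rewrite /o; case: excluded_middle_informative => [h|nh] ho.
  by case: (proj2_sig (constructive_indefinite_description _ h)) => _ /(_ ho).
apply: nh; exists (btf m r); split; first by exists r.
move=> e; apply: hne; have := congr1 (fun f : tup => f j) e; rewrite !ffunE; exact.
Qed.

Definition RG := [set m in Mgood | o m == btf m zp].
Definition NR := [set m in Mgood | o m != btf m zp].

Lemma c1 : #|RG| + #|NR| = #|Mgood|.
Proof. exact: card_split. Qed.

Lemma c2 : #|Mgood| + #|NR| <= 2 ^ (k * n).
Proof.
apply: (@leq_trans #|{: tup}|); last by rewrite card_tuples.
have -> : #|Mgood| = #|[set btf m zp | m in Mgood]|.
  rewrite card_in_imset // => m1 m2 h1 h2 h.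
  exact: (decK h1 adm_zp h2 adm_zp h).
have -> : #|NR| = #|[set o m | m in NR]|.
  rewrite card_in_imset // => m1 m2; rewrite !inE => /andP[h1 n1] /andP[h2 n2] h.
  have [r1 [a1 e1]] := o_spec (elimN eqP n1).
  have [r2 [a2 e2]] := o_spec (elimN eqP n2).
  by apply: (decK h1 a1 h2 a2); rewrite e1 e2.
apply: card_disj; apply/setP => x; rewrite !inE; apply/negP => /andP[].
move=> /imsetP[m' hm' ->] /imsetP[m]; rewrite inE => /andP[hm nm] e.
have [r [a1 e1]] := o_spec (elimN eqP nm).
have em : m = m' by apply: (decK hm a1 hm' adm_zp); rewrite e1 e.
by move: nm; rewrite -e em eqxx.
Qed.

Local Notation bb m := (b_sig enc i m).
Local Notation aa m := (a_sig enc i m).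

Lemma RG_good m : m \in RG -> m \in Mgood.
Proof. by rewrite inE => /andP[]. Qed.
Lemma RG_rigid m : m \in RG -> rigid m.
Proof. by rewrite inE => /andP[_ /eqP/o_rigid]. Qed.

Definition chb (bv : {ffun 'I_n -> bool}) : {ffun 'I_n -> bool} :=
  if [pick m0 in RG | bb m0 == bv] is Some m0 then aa m0 else pi bv.

Lemma chb_spec m : m \in RG -> exists2 p, p \in RG & bb p = bb m /\ chb (bb m) = aa p.
Proof.
move=> hm; rewrite /chb; case: pickP => [p /andP[hp /eqP hb]|none].
  by exists p.
by have := none m; rewrite hm eqxx.
Qed.

Definition X := [set m in RG | aa m != chb (bb m)].
Definition alpha m : tup := [ffun j => a_sig enc j m].
Definition tgt m : tup := [ffun j => if j == i then chb (bb m) else a_sig enc j m].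

Lemma keyK' m m' : m \in RG -> m' \in Mgood ->
  (forall j, j != i -> a_sig enc j m = a_sig enc j m') -> bb m = bb m' -> m = m'.
Proof.
move=> h h' Ha Hb.
exact: (keyK (proj1 (HMgood m) (RG_good h)) (proj1 (HMgood m') h') (RG_rigid h) Ha Hb).
Qed.

Lemma c3 : #|X| + #|RG| <= 2 ^ (k * n).
Proof.
apply: (@leq_trans #|{: tup}|); last by rewrite card_tuples.
have -> : #|RG| = #|[set alpha m | m in RG]|.
  rewrite card_in_imset // => m1 m2 h1 h2 h.
  have Ha j : a_sig enc j m1 = a_sig enc j m2.
    by have := congr1 (fun f : tup => f j) h; rewrite !ffunE.
  apply: keyK' => //; first exact: RG_good.
  by apply: bdet; [apply: RG_rigid|apply: Ha].
have -> : #|X| = #|[set tgt m | m in X]|.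
  rewrite card_in_imset // => m1 m2 /setIdP[h1 _] /setIdP[h2 _] h.
  have Ha j : j != i -> a_sig enc j m1 = a_sig enc j m2.
    by move=> nj; have := congr1 (fun f : tup => f j) h; rewrite !ffunE (negbTE nj).
  have Hc : chb (bb m1) = chb (bb m2).
    by have := congr1 (fun f : tup => f i) h; rewrite !ffunE eqxx.
  apply: keyK' => //; first exact: RG_good.
  have [p1 hp1 [e1 c1']] := chb_spec h1.
  have [p2 hp2 [e2 c2']] := chb_spec h2.
  rewrite -e1 -e2; apply: bdet; first exact: RG_rigid.
  by rewrite -c1' -c2'.
rewrite addnC; apply: card_disj; apply/setP => x; rewrite !inE; apply/negP => /andP[].
move=> /imsetP[m' hm' ->] /imsetP[m] /setIdP[hm nm] e.
have Ha j : j != i -> a_sig enc j m = a_sig enc j m'.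
  by move=> nj; have := congr1 (fun f : tup => f j) e; rewrite !ffunE (negbTE nj).
have Hc : aa m' = chb (bb m).
  by have := congr1 (fun f : tup => f i) e; rewrite !ffunE eqxx.
have [p hp [e1 c1']] := chb_spec hm.
have Hb : bb m = bb m'.
  by rewrite -e1; apply: bdet; [apply: RG_rigid|rewrite -c1' -Hc].
have em := keyK' hm (RG_good hm') Ha Hb.
by move: nm; rewrite -Hc em eqxx.
Qed.

Lemma c4 : #|[set m in Mgood | pi (bb m) != aa m]| <= #|NR| + #|X|.
Proof.
pose Q := [set m in Mgood | chb (bb m) != aa m].
apply: (@leq_trans #|Q|).
  rewrite (card_part (fun m => bb m)) [X in _ <= X](card_part (fun m => bb m)).
  apply: leq_sum => bv _.
  pose C := [set m in Mgood | bb m == bv].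
  have E1 : #|[set x in [set m in Mgood | pi (bb m) != aa m] | bb x == bv]|
     + #|[set m in Mgood | (aa m == pi bv) && (bb m == bv)]| = #|C|.
    rewrite -(card_split C (fun m => aa m != pi bv)); congr (_ + _);
      apply: eq_card => x; rewrite !inE ?negbK;
      case Eq: (bb x == bv); rewrite ?andbF ?andFb ?andbT // (eqP Eq) // eq_sym //.
  have E2 : #|[set x in Q | bb x == bv]|
     + #|[set m in Mgood | (aa m == chb bv) && (bb m == bv)]| = #|C|.
    rewrite -(card_split C (fun m => aa m != chb bv)); congr (_ + _);
      apply: eq_card => x; rewrite !inE ?negbK;
      case Eq: (bb x == bv); rewrite ?andbF ?andFb ?andbT // (eqP Eq) // eq_sym //.
  have := Hpi bv (chb bv); move: E1 E2 => h1 h2 h3.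
  rewrite -(leq_add2r #|[set m in Mgood | aa m == pi bv & bb m == bv]|) h1 -h2 leq_add2l; exact: h3.
apply: (@leq_trans #|NR :|: X|).
  apply: subset_leq_card; apply/subsetP => m; rewrite !inE.
  case/andP=> hm hc; rewrite hm /=.
  case: (eqVneq (o m) (btf m zp)) => //= ho.
  by rewrite eq_sym.
by rewrite cardsU leq_subr.
Qed.

Lemma count_main : #|[set m in Mgood | pi (bb m) != aa m]| + 3 * #|Mgood| <= 3 * 2 ^ (k * n).
Proof. have := c1; have := c2; have := c3; have := c4; lia. Qed.

End Net.
Local Open Scope ring_scope.

Theorem lemma3 (R : realFieldType) (V E : finType) (tail head : E -> V)
  (c : E -> nat) (k n : nat) (s_ t_ : 'I_k -> V)
  (Hacyclic : exists rank : V -> nat, forall e : E, (rank (tail e) < rank (head e))%N)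
  (enc : encoder c k n) (Henc : code_local tail head s_ t_ enc)
  (dec : decoder k n)
  (Mgood : {set msg k n})
  (HMgood : forall m, m \in Mgood <-> good enc dec m)
  (eps : R) (Heps : 0 <= eps)
  (Hcard : (1 - eps) * (2 ^ (k * n))%:R <= (#|Mgood|%:R : R))
  (i : 'I_k) (pi : {ffun 'I_n -> bool} -> {ffun 'I_n -> bool})
  (Hpi : forall bh ah : {ffun 'I_n -> bool},
     (#|[set m in Mgood | (a_sig enc i m == ah) && (b_sig enc i m == bh)]|
      <= #|[set m in Mgood | (a_sig enc i m == pi bh) && (b_sig enc i m == bh)]|)%N) :
  (#|[set m in Mgood | pi (b_sig enc i m) != a_sig enc i m]|%:R : R)
    <= 3 * eps * (2 ^ (k * n))%:R.
Proof.
have [rank Hrank] := Hacyclic.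
have H := count_main Hrank Henc HMgood Hpi.
move: H; rewrite -(ler_nat R) natrD !natrM.
move: Hcard.
set M := (#|_|%:R : R).
set G := (#|Mgood|%:R : R).
set N := ((2 ^ (k * n))%:R : R).
move=> h1 h2.
nra.
Qed.
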